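(* Let $T$ be a chain with entries in $\{1,2\}$, not consisting only of $1$'s and not consisting only of $2$'s, such that the maximal initial block of consecutive $2$'s of $T$ and the maximal final block of consecutive $2$'s of $T$ each have even length (possibly zero), and suppose $\mathcal{Z}(T)>\tfrac13$. Write $T=[1^{e^1_1}2^{e^2_1}1^{e^1_2}2^{e^2_2}\cdots1^{e^1_n}2^{e^2_n}]$, where all $e^j_i$ are positive integers except that $e^1_1$ and $e^2_n$ may be $0$. Then there is $j\in\{1,2\}$ such that $e^j_i\le 2$ for all $i\in\{1,\dots,n\}$.
   Context: A chain is a finite sequence $T=[a_1a_2\dots a_n]$ of positive integers; $c^e$ denotes $e$ consecutive copies of the entry $c$. For a chain $S=[s_1\dots s_m]$, $[0;s_1,\dots,s_m]$ and $[s_1;s_2,\dots,s_m]$ denote finite continued fractions. Define $\mathcal{Z}(T)=\big(\max_{1\le i\le n}([a_i;a_{i+1},\dots,a_n]+[0;a_{i-1},\dots,a_1])\big)^{-1}$, where for $i=1$ the second summand is $0$. *)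

(* Defs.v *)
From mathcomp Require Import all_boot all_order all_algebra.
Set Implicit Arguments. Unset Strict Implicit. Unset Printing Implicit Defensive.
Import Order.TTheory GRing.Theory Num.Theory.
Local Open Scope ring_scope.

(* A chain is a finite sequence of positive integers (seq nat). *)

Fixpoint cf (a : nat) (s : seq nat) : rat :=
  match s with
  | [::] => a%:R
  | b :: s' => a%:R + (cf b s')^-1
  end.

(* [0; s_1, ..., s_k], with value 0 for the empty sequence. *)
Definition cf0 (s : seq nat) : rat :=
  match s with
  | [::] => 0
  | b :: s' => (cf b s')^-1
  end.

(* For 0-indexed position i (paper's index i+1):
   [a_{i+1}; a_{i+2},...,a_n] + [0; a_i, ..., a_1]. *)
Definition Zterm (T : seq nat) (i : nat) : rat :=
  cf (nth 0%N T i) (drop i.+1 T) + cf0 (rev (take i T)).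

(* Z(T) = (max_i Zterm T i)^{-1}; all terms are positive, so folding
   max from 0 computes the maximum for nonempty T. *)
Definition Zc (T : seq nat) : rat :=
  (foldr Num.max 0 [seq Zterm T i | i <- iota 0 (size T)])^-1.

Definition init2 (T : seq nat) : nat := find (fun a => a != 2%N) T.
Definition final2 (T : seq nat) : nat := find (fun a => a != 2%N) (rev T).

Definition blocks (e1 e2 : seq nat) : seq nat :=
  flatten [seq nseq p.1 1%N ++ nseq p.2 2%N | p <- zip e1 e2].

(* Main.v *)
Require Import Defs.
From mathcomp Require Import all_boot all_order all_algebra.
From mathcomp Require Import ring lra zify.
Import Order.TTheory GRing.Theory Num.Theory.
Local Open Scope ring_scope.

Definition all12 (s : seq nat) := all (fun a => (a == 1%N) || (a == 2%N)) s.

Lemma cf_cf0 b s : cf b s = b%:R + cf0 s.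
Proof. by case: s => [|c s] /=; rewrite ?addr0. Qed.

Lemma cf0_cons b s : cf0 (b :: s) = (b%:R + cf0 s)^-1.
Proof. by rewrite /= cf_cf0. Qed.

Lemma cf0_ge0 s : 0 <= cf0 s.
Proof.
elim: s => [|b s IH] //; rewrite cf0_cons invr_ge0; apply: addr_ge0 => //.
Qed.

Lemma cf0_le1 s : all12 s -> cf0 s <= 1.
Proof.
case: s => [|b s] //=; case/andP => hb _; rewrite cf_cf0.
have hb1 : (1 <= b)%N by case/orP: hb => /eqP ->.
have h1 : 1 <= b%:R + cf0 s :> rat.
  have : (1%:R <= b%:R :> rat) by rewrite ler_nat.
  have := cf0_ge0 s. lra.
rewrite invf_le1 //; lra.
Qed.

Arguments cf0_le1 {s}.

Lemma cf0_2 s : cf0 (2%N :: s) <= 1/2.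
Proof.
rewrite cf0_cons div1r lef_pV2 ?posrE; have := cf0_ge0 s; lra.
Qed.

Lemma cf0_1 s : all12 s -> 1/2 <= cf0 (1%N :: s).
Proof.
move=> h; rewrite cf0_cons div1r lef_pV2 ?posrE; have := cf0_ge0 s; have := cf0_le1 h; lra.
Qed.

Lemma cf0_13 s : all12 s -> 1/3 <= cf0 (2%N :: s).
Proof.
move=> h; rewrite cf0_cons div1r lef_pV2 ?posrE; have := cf0_ge0 s; have := cf0_le1 h; lra.
Qed.

Lemma cf0_23 s : 2/3 <= cf0 (1%N :: 2%N :: s).
Proof.
have h2 := cf0_2 s; have h0 := cf0_ge0 (2%N :: s).
rewrite cf0_cons.
have -> : 2/3 = (3/2 : rat)^-1 by rewrite invf_div.
rewrite lef_pV2 ?posrE; lra.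
Qed.

Lemma cf0_flip a s t : (0 < a)%N -> cf0 (a :: s) < cf0 (a :: t) -> cf0 t < cf0 s.
Proof.
move=> ha; have ha' : 1 <= a%:R :> rat by rewrite (ler_nat _ 1).
rewrite !cf0_cons ltf_pV2 ?posrE; have := cf0_ge0 s; have := cf0_ge0 t; lra.
Qed.

Lemma cf0_comp s : 1 - cf0 (2%N :: s) = cf0 (1%N :: 1%N :: s).
Proof.
rewrite !cf0_cons; move: (cf0_ge0 s); move: (cf0 s) => t h.
have h1 : (1 + t) != 0 by rewrite gt_eqF //; lra.
have h2 : (2 + t) != 0 by rewrite gt_eqF //; lra.
have -> : (1%:R + (1%:R + t)^-1) = (2 + t) / (1 + t).
  by field.
rewrite invf_div; field.
by rewrite gt_eqF //; lra.
Qed.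

Definition good T := [/\ all12 T, (forall i, (i < size T)%N -> Zterm T i < 3),
   ~~ odd (init2 T) & ~~ odd (final2 T)].

Lemma Zterm_cat X c Y : Zterm (X ++ c :: Y) (size X) = c%:R + cf0 Y + cf0 (rev X).
Proof.
rewrite /Zterm nth_cat ltnn subnn /=.
rewrite cf_cf0 drop_cat. rewrite ltnNge leqnSn /= subSnn /=.
by rewrite take_cat ltnn subnn take0 cats0 drop0.
Qed.

Lemma good_lt T X c Y : good T -> T = X ++ c :: Y -> c%:R + cf0 Y + cf0 (rev X) < 3.
Proof.
case=> _ hZ _ _ hT; rewrite -Zterm_cat -hT; apply: hZ.
by rewrite hT size_cat /= addnS ltnS leq_addr.
Qed.

Arguments good_lt {T X c Y}.
Arguments cf0_1 {s}.
Arguments cf0_13 {s}.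

Lemma all12_rev s : all12 (rev s) = all12 s.
Proof. by rewrite /all12 all_rev. Qed.

Lemma V1 T X : good T -> T = X ++ [:: 2; 1]%N -> False.
Proof.
move=> g hT; have := good_lt g hT; rewrite cf0_cons /= addr0 invr1.
have := cf0_ge0 (rev X); lra.
Qed.

Lemma V2 T X W : good T -> T = X ++ [:: 2; 2; 1; 2]%N ++ W -> False.
Proof.
move=> g hT; have hT' : T = (X ++ [:: 2%N]) ++ 2%N :: (1%N :: 2%N :: W) by rewrite hT -catA.
have := good_lt g hT'; rewrite cats1 rev_rcons.
have hX : all12 (rev X).
  by rewrite all12_rev; case: g => + _ _ _; rewrite hT /all12 all_cat => /andP [].
have := cf0_13 hX; have := cf0_23 W; lra.
Qed.

Lemma V3 T X W : good T -> T = X ++ [:: 1; 2; 1]%N ++ W -> False.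
Proof.
move=> g hT; have hT' : T = (X ++ [:: 1%N]) ++ 2%N :: (1%N :: W) by rewrite hT -catA.
have : all12 T by case: g.
rewrite hT /all12 all_cat /= => /andP [hX hW].
have hX' : all12 (rev X) by rewrite all12_rev.
have := good_lt g hT'; rewrite cats1 rev_rcons.
have := cf0_1 hX'; have := cf0_1 hW; lra.
Qed.

Fixpoint rep (k : nat) (x : seq nat) : seq nat :=
  if k is k'.+1 then x ++ rep k' x else [::].

Lemma rep_rcons k x : rep k.+1 x = rep k x ++ x.
Proof.
elim: k => [|k IH]; first by rewrite /= cats0.
by change (x ++ rep k.+1 x = (x ++ rep k x) ++ x); rewrite IH catA.
Qed.

Lemma rev_rep k x : rev (rep k x) = rep k (rev x).
Proof. by elim: k => [|k IH] //=; rewrite rev_cat IH -rep_rcons. Qed.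

Lemma size_rep k x : size (rep k x) = (k * size x)%N.
Proof. by elim: k => [|k IH] //=; rewrite size_cat IH mulSn. Qed.

Lemma all12_rep k x : all12 x -> all12 (rep k x).
Proof. by move=> h; elim: k => [|k IH] //=; rewrite /all12 all_cat -/(all12 x) h. Qed.

Lemma good_rev T : good T -> good (rev T).
Proof.
case=> h1 h2 h3 h4; split.
- by rewrite all12_rev.
- move=> i; rewrite size_rev => hi.
  have hj : (size T - i.+1 < size T)%N by rewrite subnSK // leq_subr.
  have := h2 _ hj; rewrite /Zterm nth_rev // drop_rev take_rev revK !cf_cf0.
  have -> : (size T - i = (size T - i.+1).+1)%N by rewrite subnSK.
  move=> h; lra.
- exact: h4.
- by rewrite /final2 revK.
Qed.

Lemma flip1 s t : cf0 (1%N :: s) < cf0 (1%N :: t) -> cf0 t < cf0 s.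
Proof. exact: cf0_flip. Qed.
Lemma flip2 s t : cf0 (2%N :: s) < cf0 (2%N :: t) -> cf0 t < cf0 s.
Proof. exact: cf0_flip. Qed.
Lemma lt_nil s : cf0 s < cf0 [::] -> False.
Proof. have := cf0_ge0 s; rewrite [cf0 [::]]/=; lra. Qed.
Lemma lt_12 s t : all12 s -> cf0 (1%N :: s) < cf0 (2%N :: t) -> False.
Proof. move=> h; have := cf0_1 h; have := cf0_2 t; lra. Qed.

Arguments lt_12 {s t}.

Lemma final2_cat Q s : has (fun a => a != 2%N) (rev s) ->
  final2 (Q ++ s) = find (fun a => a != 2%N) (rev s).
Proof. by move=> h; rewrite /final2 rev_cat find_cat h. Qed.

Lemma good_all12 T : good T -> all12 T. Proof. by case. Qed.
Lemma good_final T : good T -> ~~ odd (final2 T). Proof. by case. Qed.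

Arguments good_all12 {T}.
Arguments good_final {T}.
Arguments V1 {T X}.
Arguments V2 {T X W}.
Arguments V3 {T X W}.

Lemma all12_cons a s : all12 (a :: s) -> ((a == 1%N) || (a == 2%N)) /\ all12 s.
Proof. by case/andP. Qed.

Lemma Lrec m : forall T Q V u, good T -> T = Q ++ [:: 2; 2]%N ++ V -> all12 u ->
  cf0 (rep m [:: 1;1;2;2]%N ++ [:: 1;1;1]%N ++ u) < cf0 V ->
  exists j W, (j <= m)%N /\ V = rep j [:: 1;1;2;2]%N ++ [:: 1;1;1]%N ++ W.
Proof.
elim: m => [|m IH] T Q V u g hT hu.
- have hV : all12 V by move: (good_all12 g); rewrite hT /all12 !all_cat => /and3P [].
  case: V hT hV => [|a V] hT hV; first by case/lt_nil.
  case/all12_cons: hV => /orP [] /eqP ha hV; subst a; last first.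
    by move=> h; exfalso; apply: (lt_12 _ h); rewrite /all12 /= -/(all12 _).
  case: V hT hV => [|b V] hT hV.
    by move=> _; exfalso; apply: (V1 (X := Q ++ [:: 2%N]) g); rewrite hT -catA.
  case/all12_cons: hV => /orP [] /eqP hb hV; subst b; last first.
    by move=> _; exfalso; apply: (V2 (X := Q) (W := V) g); rewrite hT.
  case: V hT hV => [|c V] hT hV.
    by case/flip1/flip1/lt_nil.
  case/all12_cons: hV => /orP [] /eqP hc hV; subst c.
    by move=> _; exists 0%N, V.
  by move/flip1/flip1 => h; exfalso; apply: (lt_12 hu h).
- have hV : all12 V by move: (good_all12 g); rewrite hT /all12 !all_cat => /and3P [].
  have hY : all12 (rep m [:: 1;1;2;2]%N ++ [:: 1;1;1]%N ++ u).
    by rewrite /all12 !all_cat -/(all12 _) all12_rep.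
  case: V hT hV => [|a V] hT hV; first by case/lt_nil.
  case/all12_cons: hV => /orP [] /eqP ha hV; subst a; last first.
    by move=> h; exfalso; apply: (lt_12 _ h); rewrite /all12 /= -/(all12 _).
  case: V hT hV => [|b V] hT hV.
    by move=> _; exfalso; apply: (V1 (X := Q ++ [:: 2%N]) g); rewrite hT -catA.
  case/all12_cons: hV => /orP [] /eqP hb hV; subst b; last first.
    by move=> _; exfalso; apply: (V2 (X := Q) (W := V) g); rewrite hT.
  case: V hT hV => [|c V] hT hV.
    by case/flip1/flip1/lt_nil.
  case/all12_cons: hV => /orP [] /eqP hc hV; subst c.
    by move=> _; exists 0%N, V.
  move/flip1/flip1/flip2.
  case: V hT hV => [|d V] hT hV.
    by move=> _; exfalso; move: (good_final g); rewrite hT final2_cat.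
  case/all12_cons: hV => /orP [] /eqP hd hV; subst d.
    by move=> h; exfalso; apply: (lt_12 hV h).
  move/flip2 => h.
  have hT' : T = (Q ++ [:: 2; 2; 1; 1]%N) ++ [:: 2; 2]%N ++ V by rewrite hT -catA.
  have [j [W [hj hVW]]] := IH T _ V u g hT' hu h.
  by exists j.+1, W; split => //; rewrite hVW.
Qed.

Lemma ends11 j : exists Y, [:: 1;1;1]%N ++ rep j [:: 2;2;1;1]%N = Y ++ [:: 1;1]%N.
Proof.
case: j => [|j]; first by exists [:: 1%N].
by exists ([:: 1;1;1]%N ++ rep j [:: 2;2;1;1]%N ++ [:: 2;2]%N); rewrite rep_rcons -!catA.
Qed.

Lemma Rred n : forall j r P S T, (size r <= n)%N -> good T ->
  T = P ++ [:: 1;1;1]%N ++ rep j [:: 2;2;1;1]%N ++ r ++ [:: 2;2;2]%N ++ S ->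
  (exists k, rep j [:: 2;2;1;1]%N ++ r = rep k [:: 2;2;1;1]%N) \/
  (exists P' w' S', (size w' < size (rep j [:: 2;2;1;1]%N ++ r))%N /\
      T = P' ++ [:: 1;1;1]%N ++ w' ++ [:: 2;2;2]%N ++ S').
Proof.
elim: n => [|n IH] j r P S T hs g hT.
  by case: r hs hT => // _ _; left; exists j; rewrite cats0.
have hr : all12 r by move: (good_all12 g); rewrite hT /all12 !all_cat => /and5P [].
have [Y hY] := ends11 j.
case: r hs hT hr => [|a r] hs hT hr; first by left; exists j; rewrite cats0.
case/all12_cons: hr => /orP [] /eqP ha hr; subst a.
  right; exists (P ++ Y), r, S; split.
    by rewrite size_cat /= addnS ltnS leq_addl.
  by rewrite hT [[:: 1;1;1]%N ++ _]catA hY -?catA.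
case: r hs hT hr => [|b r] hs hT hr.
  right; exists P, (rep j [:: 2;2;1;1]%N), (2%N :: S); split.
    by rewrite size_cat /= addn1.
  by rewrite hT -?catA.
case/all12_cons: hr => /orP [] /eqP hb hr; subst b.
  exfalso; apply: (V3 (X := P ++ Y ++ [:: 1%N]) (W := r ++ [:: 2;2;2]%N ++ S) g).
  by rewrite hT [[:: 1;1;1]%N ++ _]catA hY -?catA.
case: r hs hT hr => [|c r] hs hT hr.
  right; exists P, (rep j [:: 2;2;1;1]%N), ([:: 2;2]%N ++ S); split.
    by rewrite size_cat /= addn2.
  by rewrite hT -?catA.
case/all12_cons: hr => /orP [] /eqP hc hr; subst c; last first.
  right; exists P, (rep j [:: 2;2;1;1]%N), (r ++ [:: 2;2;2]%N ++ S); split.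
    rewrite size_cat /=; lia.
  by rewrite hT -?catA.
case: r hs hT hr => [|d r] hs hT hr.
  exfalso; apply: (V2 (X := P ++ [:: 1;1;1]%N ++ rep j [:: 2;2;1;1]%N) (W := [:: 2;2]%N ++ S) g).
  by rewrite hT -?catA.
case/all12_cons: hr => /orP [] /eqP hd hr; subst d; last first.
  exfalso; apply: (V2 (X := P ++ [:: 1;1;1]%N ++ rep j [:: 2;2;1;1]%N) (W := r ++ [:: 2;2;2]%N ++ S) g).
  by rewrite hT -?catA.
have hs' : (size r <= n)%N by move: hs; rewrite /= !ltnS => /ltnW/ltnW/ltnW.
have hT' : T = P ++ [:: 1;1;1]%N ++ rep j.+1 [:: 2;2;1;1]%N ++ r ++ [:: 2;2;2]%N ++ S.
  by rewrite hT rep_rcons -?catA.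
case: (IH j.+1 r P S T hs' g hT') => [[k hk]|[P' [w' [S' [hw hT2]]]]].
  by left; exists k; rewrite -hk rep_rcons -?catA.
right; exists P', w', S'; split => //.
by move: hw; rewrite rep_rcons !size_cat /= !addnS addn0.
Qed.

Lemma Fk T P k S : good T ->
  T = P ++ [:: 1;1;1]%N ++ rep k [:: 2;2;1;1]%N ++ [:: 2;2;2]%N ++ S ->
  (forall T' P' w' S', (size w' < 4 * k)%N -> good T' ->
     T' = P' ++ [:: 1;1;1]%N ++ w' ++ [:: 2;2;2]%N ++ S' -> False) -> False.
Proof.
move=> g hT IH.
have hP : all12 (rev P).
  by rewrite all12_rev; move: (good_all12 g); rewrite hT /all12 all_cat => /andP [].
have hS : all12 S.
  by move: (good_all12 g); rewrite hT /all12 !all_cat => /and5P [].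
have hT1 : T = (P ++ [:: 1;1;1]%N ++ rep k [:: 2;2;1;1]%N) ++ 2%N :: (2%N :: 2%N :: S).
  by rewrite hT -?catA.
have := good_lt g hT1; rewrite !rev_cat rev_rep => hlt.
have h : cf0 (rep k [:: 1;1;2;2]%N ++ [:: 1;1;1]%N ++ rev P) < cf0 (1%N :: 1%N :: 2%N :: S).
  move: hlt; rewrite -catA (_ : rev [:: 2;2;1;1]%N = [:: 1;1;2;2]%N) // (_ : rev [:: 1;1;1]%N = [:: 1;1;1]%N) // -cf0_comp; lra.
clear hlt; case: k hT IH hT1 h => [|k] hT IH hT1 h.
  by move: h => /flip1/flip1 h; apply: (lt_12 hP h).
move: h => /flip1/flip1/flip2.
case: S hT hS hT1 => [|a S] hT hS hT1.
  move=> _; move: (good_final g); rewrite hT rep_rcons.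
  rewrite (_ : P ++ _ = (P ++ [:: 1;1;1]%N ++ rep k [:: 2;2;1;1]%N) ++ [:: 2;2;1;1;2;2;2]%N); last by rewrite -?catA.
  by rewrite final2_cat.
case/all12_cons: hS => /orP [] /eqP ha hS; subst a.
  by move=> h; apply: (lt_12 hS h).
move/flip2 => h.
have hT2 : T = (P ++ [:: 1;1;1]%N ++ rep k.+1 [:: 2;2;1;1]%N ++ [:: 2;2]%N) ++ [:: 2;2]%N ++ S.
  by rewrite hT -?catA.
have [j [W [hj hSW]]] := @Lrec k T _ S (rev P) g hT2 hP h.
have hT3 : T = (P ++ [:: 1;1;1]%N ++ rep k.+1 [:: 2;2;1;1]%N ++ [:: 2%N]) ++ [:: 2;2;2]%N
   ++ rep j [:: 1;1;2;2]%N ++ [:: 1;1;1]%N ++ W by rewrite hT hSW -?catA.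
apply: (IH (rev T) (rev W) (rep j [:: 2;2;1;1]%N)
          (rev (P ++ [:: 1;1;1]%N ++ rep k.+1 [:: 2;2;1;1]%N ++ [:: 2%N]))).
- by rewrite size_rep /=; lia.
- exact: good_rev.
- by rewrite hT3 !rev_cat rev_rep -?catA.
Qed.

Lemma Mmain n : forall T P w S, (size w < n)%N -> good T ->
  T = P ++ [:: 1;1;1]%N ++ w ++ [:: 2;2;2]%N ++ S -> False.
Proof.
elim: n => [//|n IH] T P w S hw g hT.
have hT0 : T = P ++ [:: 1;1;1]%N ++ rep 0 [:: 2;2;1;1]%N ++ w ++ [:: 2;2;2]%N ++ S by [].
case: (@Rred (size w) 0 w P S T (leqnn _) g hT0) => [[k hk]|[P' [w' [S' [hs hT']]]]].
- rewrite /= in hk; rewrite hk in hT hw.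
  apply: (@Fk T P k S g hT) => T' P' w' S' hs g' hT'.
  apply: (IH T' P' w' S' _ g' hT').
  by move: hw; rewrite size_rep /=; lia.
- apply: (IH T P' w' S' _ g hT').
  by move: hs hw; rewrite /=; lia.
Qed.

Lemma foldr_max_ge (s : seq rat) x : x \in s -> x <= foldr Num.max 0 s.
Proof.
elim: s => [//|y s IH] /=; rewrite in_cons => /orP [/eqP ->|h].
  by rewrite le_max lexx.
by rewrite le_max (IH h) orbT.
Qed.

Lemma Zc_good T : Zc T > 1/3 -> forall i, (i < size T)%N -> Zterm T i < 3.
Proof.
rewrite /Zc; set M := foldr _ _ _ => hM i hi.
have hle : Zterm T i <= M.
  apply: foldr_max_ge; apply/mapP; exists i => //; by rewrite mem_iota.
have Mpos : 0 < M.
  rewrite ltNge; apply/negP => h; move: hM; rewrite ltNge; apply/negP/negPn.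
  apply: (le_trans _ (_ : 0 <= 1/3)) => //; by rewrite invr_le0.
have hMM : M * M^-1 = 1 by rewrite mulfV // gt_eqF.
have : M < 3 by move: hM Mpos hMM; move: (M^-1) => y; nra.
by apply: le_lt_trans.
Qed.

Lemma nth111 S d : (d < 3)%N -> nth 0%N ([:: 1;1;1]%N ++ S) d = 1%N.
Proof. by case: d => [|[|[|]]]. Qed.
Lemma nth222 S d : (d < 3)%N -> nth 0%N ([:: 2;2;2]%N ++ S) d = 2%N.
Proof. by case: d => [|[|[|]]]. Qed.

Lemma take_catl n (s1 s2 : seq nat) : (n <= size s1)%N -> take n (s1 ++ s2) = take n s1.
Proof.
rewrite take_cat leq_eqVlt => /orP [/eqP ->|-> //].
by rewrite ltnn subnn take0 cats0 take_size.
Qed.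

Lemma comb_dir (T P1 S1 P2 S2 : seq nat) (a b : seq nat) : size a = 3 ->
  T = P1 ++ a ++ S1 -> T = P2 ++ b ++ S2 -> (size P1 + 3 <= size P2)%N ->
  T = P1 ++ a ++ drop (size P1 + 3) P2 ++ b ++ S2.
Proof.
move=> ha h1 h2 hle.
have e : take (size P1 + 3) T = P1 ++ a.
  by rewrite h1 catA take_catl ?size_cat ?ha // take_oversize // size_cat ha.
have e2 : take (size P1 + 3) T = take (size P1 + 3) P2 by rewrite h2 take_catl.
have e3 : P2 = (P1 ++ a) ++ drop (size P1 + 3) P2 by rewrite -e e2 cat_take_drop.
by rewrite {1}h2 {1}e3 -!catA.
Qed.

Lemma comb {T P1 S1 P2 S2} : T = P1 ++ [:: 1;1;1]%N ++ S1 -> T = P2 ++ [:: 2;2;2]%N ++ S2 ->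
  (exists P w S, T = P ++ [:: 1;1;1]%N ++ w ++ [:: 2;2;2]%N ++ S) \/
  (exists P w S, T = P ++ [:: 2;2;2]%N ++ w ++ [:: 1;1;1]%N ++ S).
Proof.
move=> h1 h2.
case: (leqP (size P1 + 3) (size P2)) => H1.
  by left; exists P1, (drop (size P1 + 3) P2), S2; apply: comb_dir h1 h2 H1.
case: (leqP (size P2 + 3) (size P1)) => H2.
  by right; exists P2, (drop (size P2 + 3) P1), S1; apply: comb_dir h2 h1 H2.
exfalso; case: (leqP (size P1) (size P2)) => H3.
  have : nth 0%N T (size P2) = 2%N by rewrite h2 nth_cat ltnn subnn.
  rewrite h1 nth_cat ltnNge H3 /= nth111 //; lia.
have : nth 0%N T (size P1) = 1%N by rewrite h1 nth_cat ltnn subnn.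
rewrite h2 nth_cat ltnNge (ltnW H3) /= nth222 //; lia.
Qed.

Definition fblk (p : nat * nat) := nseq p.1 1%N ++ nseq p.2 2%N.

Lemma blocks_split e1 e2 i : size e1 = size e2 -> (i < size e1)%N ->
  exists A B, blocks e1 e2 = A ++ nseq (nth 0%N e1 i) 1%N ++ nseq (nth 0%N e2 i) 2%N ++ B.
Proof.
move=> hs hi.
have hz : (i < size (zip e1 e2))%N by rewrite size_zip hs minnn -hs.
exists (flatten (map fblk (take i (zip e1 e2)))), (flatten (map fblk (drop i.+1 (zip e1 e2)))).
rewrite /blocks -/fblk -{1}(cat_take_drop i (zip e1 e2)) (drop_nth (0%N, 0%N) hz).
by rewrite map_cat flatten_cat /= nth_zip // /fblk -!catA.
Qed.

Lemma occ111 T P S k : T = P ++ nseq k.+3 1%N ++ S -> T = P ++ [:: 1;1;1]%N ++ (nseq k 1%N ++ S).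
Proof. by move=> ->. Qed.
Lemma occ222 T P S k : T = P ++ nseq k.+3 2%N ++ S -> T = P ++ [:: 2;2;2]%N ++ (nseq k 2%N ++ S).
Proof. by move=> ->. Qed.

Theorem lemma3p6 (T : seq nat) (n : nat) (e1 e2 : seq nat) :
  all (fun a => (a == 1%N) || (a == 2%N)) T ->
  ~~ all (fun a => a == 1%N) T ->
  ~~ all (fun a => a == 2%N) T ->
  ~~ odd (init2 T) -> ~~ odd (final2 T) ->
  Zc T > 1 / 3 ->
  size e1 = n -> size e2 = n ->
  (forall i, (0 < i < n)%N -> (0 < nth 0%N e1 i)%N) ->
  (forall i, (i < n.-1)%N -> (0 < nth 0%N e2 i)%N) ->
  T = blocks e1 e2 ->
  (forall i, (i < n)%N -> (nth 0%N e1 i <= 2)%N) \/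
  (forall i, (i < n)%N -> (nth 0%N e2 i <= 2)%N).
Proof.
move=> hall _ _ hi2 hf2 hZ hs1 hs2 _ _ hT.
have g : good T by split => //; exact: Zc_good.
case h1: (all (fun i => nth 0%N e1 i <= 2)%N (iota 0 n)).
  left => i hi; move/allP: h1 => /(_ i); rewrite mem_iota add0n hi; exact.
case h2: (all (fun i => nth 0%N e2 i <= 2)%N (iota 0 n)).
  right => i hi; move/allP: h2 => /(_ i); rewrite mem_iota add0n hi; exact.
exfalso.
move/negbT/allPn: h1 => [i hi hni]; move/negbT/allPn: h2 => [i' hi' hni'].
move: hi hi'; rewrite !mem_iota !add0n /= => hi hi'.
have hse : size e1 = size e2 by rewrite hs1 hs2.
have hi1 : (i < size e1)%N by rewrite hs1.
have hi1' : (i' < size e1)%N by rewrite hs1.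
have [A1 [B1 E1]] := @blocks_split e1 e2 i hse hi1.
have [A2 [B2 E2]] := @blocks_split e1 e2 i' hse hi1'.
rewrite -hT in E1 E2.
rewrite -ltnNge in hni hni'.
move: E1; rewrite (_ : nth 0%N e1 i = (nth 0%N e1 i - 3).+3); last by lia.
move/occ111 => E1.
move: E2; rewrite (_ : nth 0%N e2 i' = (nth 0%N e2 i' - 3).+3); last by lia.
rewrite catA => /occ222 E2.
case: (comb E1 E2) => [[P [w [S hT']]]|[P [w [S hT']]]].
  exact: (@Mmain (size w).+1 T P w S (ltnSn _) g hT').
apply: (@Mmain (size (rev w)).+1 (rev T) (rev S) (rev w) (rev P) (ltnSn _) (@good_rev T g)).
by rewrite hT' !rev_cat -!catA.
Qed.
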